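(* Let $k$ be a field of characteristic $\neq 2$, let $\mathfrak g$ be a central simple finite-dimensional Lie algebra over $k$, and let $A$ be a unital commutative associative $k$-algebra. Then every ideal of $\mathfrak g\otimes_k A$ is closed.
   Context: An ideal $\mathfrak a$ of a Lie algebra $L$ is closed if $Z(\mathfrak a):=\{x\in L:[x,L]\subseteq\mathfrak a\}$ equals $\mathfrak a$ (equivalently, $L/\mathfrak a$ has trivial center). $\mathfrak g\otimes_k A$ has bracket $[a\otimes f,b\otimes g]=[a,b]\otimes fg$. *)

(* Defs.v *)
From HB Require Import structures.
From mathcomp Require Import all_boot all_order all_algebra.
Set Implicit Arguments. Unset Strict Implicit. Unset Printing Implicit Defensive.
Import GRing.Theory.
Local Open Scope ring_scope.

Section Lie.
Variables (k : fieldType) (V : vectType k).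

Definition is_lie_bracket (br : V -> V -> V) : Prop :=
  [/\ forall x, linear (br x),
      forall y, linear (br^~ y),
      forall x, br x x = 0
    & forall x y z, br x (br y z) + br y (br z x) + br z (br x y) = 0].

Definition lie_ideal_vs (br : V -> V -> V) (I : {vspace V}) : Prop :=
  forall x y, y \in I -> br x y \in I.

Definition lie_simple (br : V -> V -> V) : Prop :=
  (exists x y, br x y != 0) /\
  forall I : {vspace V}, lie_ideal_vs br I -> I = 0%VS \/ I = fullv.

Definition in_centroid (br : V -> V -> V) (f : V -> V) : Prop :=
  linear f /\ forall x y, f (br x y) = br x (f y).

Definition lie_central_simple (br : V -> V -> V) : Prop :=
  lie_simple br /\
  forall f, in_centroid br f -> exists c : k, forall v, f v = c *: v.

(* ---------- the current algebra g (x)_k A ----------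
   Concrete model: with e := vbasis fullv a k-basis of V = g,
   g (x)_k A is the free A-module on e, i.e. {ffun 'I_(dim V) -> A},
   where x stands for \sum_i e_i (x) x i. *)
Variable A : comAlgType k.

Definition curr := {ffun 'I_(\dim (fullv : {vspace V})) -> A}.

Definition basisV : (\dim (fullv : {vspace V})).-tuple V := vbasis fullv.

(* [a (x) f, b (x) g] = [a,b] (x) fg, extended bilinearly *)
Definition curr_br (br : V -> V -> V) (x y : curr) : curr :=
  [ffun l => \sum_i \sum_j
     (coord basisV l (br (tnth basisV i) (tnth basisV j))) *: (x i * y j)].

Definition curr_zero : curr := [ffun => 0].
Definition curr_add (x y : curr) : curr := [ffun i => x i + y i].
Definition curr_scale (c : k) (x : curr) : curr := [ffun i => c *: x i].

Definition curr_ideal (br : V -> V -> V) (I : curr -> Prop) : Prop :=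
  [/\ I curr_zero,
      forall x y, I x -> I y -> I (curr_add x y),
      forall c x, I x -> I (curr_scale c x)
    & forall x y, I y -> I (curr_br br x y)].

Definition Zid (br : V -> V -> V) (I : curr -> Prop) (x : curr) : Prop :=
  forall y, I (curr_br br x y).

Definition curr_closed (br : V -> V -> V) (I : curr -> Prop) : Prop :=
  forall x, Zid br I x <-> I x.

End Lie.

(* Main.v *)
Require Import Defs.
From HB Require Import structures.
From mathcomp Require Import all_boot all_order all_algebra.
From mathcomp Require Import zify.
From Stdlib Require Import Classical.
Set Implicit Arguments. Unset Strict Implicit. Unset Printing Implicit Defensive.
Import GRing.Theory.
Local Open Scope ring_scope.

Section PropVspace.
Variables (k : fieldType) (W : vectType k).

Lemma prop_vspace (S : W -> Prop) :
  S 0 -> (forall u v, S u -> S v -> S (u + v)) -> (forall c u, S u -> S (c *: u)) ->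
  exists U : {vspace W}, forall v, v \in U <-> S v.
Proof.
move=> S0 SD SZ.
suff H : forall m (U : {vspace W}), (\dim (fullv : {vspace W}) - \dim U <= m)%N ->
   (forall v, v \in U -> S v) -> exists U' : {vspace W}, forall v, v \in U' <-> S v.
  apply: (H _ 0%VS (leqnn _)).
  by move=> v; rewrite memv0 => /eqP ->.
elim=> [|m IH] U hm hU;
  (case: (classic (exists v, S v /\ v \notin U)) => [[v [Sv nv]]|hno];
  last by exists U => w; split; [exact: hU | move=> Sw; case: (boolP (w \in U)) => // nw;
     exfalso; apply: hno; exists w]).
all: have sUU' : (U <= U + <[v]>)%VS by exact: addvSl.
all: have hlt : (\dim U < \dim (U + <[v]>)%VS)%N.
1,3: rewrite (ltn_leqif (dimv_leqif_sup sUU')); apply/negP => /subvP H;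
     move/negP: nv; apply; apply: H; exact: (subvP (addvSr U <[v]>) _ (memv_line v)).
all: have hle : (\dim (U + <[v]>)%VS <= \dim (fullv : {vspace W}))%N by apply: dimvS; exact: subvf.
- exfalso; lia.
- apply: (IH (U + <[v]>)%VS); first lia.
  move=> w /memv_addP [u uU [w' /vlineP [c ->] ->]].
  by apply: SD; [exact: hU | exact: SZ].
Qed.
End PropVspace.

Section LieAux.
Variables (k : fieldType) (V : vectType k) (br : V -> V -> V).
Hypothesis Hbr : is_lie_bracket br.

Lemma Hlinr x : linear (br x). Proof. by case: Hbr. Qed.
Lemma Hlinl y : linear (br^~ y). Proof. by case: Hbr. Qed.
Lemma Hbrxx x : br x x = 0. Proof. by case: Hbr. Qed.

Lemma brBr x u v : br x (u - v) = br x u - br x v.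
Proof. exact: (zmod_morphism_linear (Hlinr x)). Qed.
Lemma brZr x a v : br x (a *: v) = a *: br x v.
Proof. exact: (scalable_linear (Hlinr x)). Qed.
Lemma brBl y u v : br (u - v) y = br u y - br v y.
Proof. exact: (zmod_morphism_linear (Hlinl y)). Qed.
Lemma brZl y a v : br (a *: v) y = a *: br v y.
Proof. exact: (scalable_linear (Hlinl y)). Qed.
Lemma br0r x : br x 0 = 0.
Proof. by have := brBr x 0 0; rewrite subrr => ->; rewrite subrr. Qed.
Lemma br0l x : br 0 x = 0.
Proof. by have := brBl x 0 0; rewrite subrr => ->; rewrite subrr. Qed.
Lemma brNr x v : br x (- v) = - br x v.
Proof. by rewrite -sub0r brBr br0r sub0r. Qed.
Lemma brNl x v : br (- v) x = - br v x.
Proof. by rewrite -sub0r brBl br0l sub0r. Qed.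
Lemma brDr x u v : br x (u + v) = br x u + br x v.
Proof. by have := brBr x u (- v); rewrite opprK brNr opprK. Qed.
Lemma brDl x u v : br (u + v) x = br u x + br v x.
Proof. by have := brBl x u (- v); rewrite opprK brNl opprK. Qed.
Lemma br_anti x y : br x y = - br y x.
Proof.
have := Hbrxx (x + y); rewrite brDl !brDr !Hbrxx add0r addr0 => /eqP.
by rewrite addr_eq0 => /eqP.
Qed.
Lemma br_sumr x (I : Type) (r : seq I) (P : pred I) (F : I -> V) :
  br x (\sum_(i <- r | P i) F i) = \sum_(i <- r | P i) br x (F i).
Proof. exact: (big_morph (br x) (brDr x) (br0r x)). Qed.
Lemma br_suml x (I : Type) (r : seq I) (P : pred I) (F : I -> V) :
  br (\sum_(i <- r | P i) F i) x = \sum_(i <- r | P i) br (F i) x.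
Proof. exact: (big_morph (br^~ x) (brDl x) (br0l x)). Qed.

Inductive BrSpan : V -> Prop :=
| B0 : BrSpan 0
| Badd y z v : BrSpan v -> BrSpan (br y z + v).

Lemma ideal_dich (S : V -> Prop) : lie_simple br ->
  S 0 -> (forall u v, S u -> S v -> S (u + v)) -> (forall c u, S u -> S (c *: u)) ->
  (forall x v, S v -> S (br x v)) ->
  (forall v, S v -> v = 0) \/ (forall v, S v).
Proof.
move=> [_ Hs] S0 SD SZ Sbr.
have [U HU] := prop_vspace S0 SD SZ.
have : lie_ideal_vs br U by move=> x y /HU Sy; apply/HU; exact: Sbr.
case/Hs => EU; [left => v /HU; rewrite EU memv0 => /eqP // | right => v; apply/HU; rewrite EU; exact: memvf].
Qed.

Lemma brspan_all : lie_simple br -> forall v, BrSpan v.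
Proof.
move=> Hs.
have SD : forall u v, BrSpan u -> BrSpan v -> BrSpan (u + v).
  move=> u v; elim=> [|y z w _ IH] Hv; first by rewrite add0r.
  by rewrite -addrA; apply: Badd; exact: IH.
have SZ : forall c u, BrSpan u -> BrSpan (c *: u).
  move=> c u; elim=> [|y z w _ IH]; first by rewrite scaler0; exact: B0.
  by rewrite scalerDr -brZr; apply: Badd.
have Sbr : forall x v, BrSpan v -> BrSpan (br x v).
  by move=> x v _; rewrite -[br x v]addr0; apply: Badd; exact: B0.
case: (ideal_dich Hs B0 SD SZ Sbr) => // H.
exfalso; have [[x [y nz]] _] := Hs; move/negP: nz; apply; apply/eqP.
apply: H; rewrite -[br x y]addr0; apply: Badd; exact: B0.
Qed.

Section Claim.
Variable n : nat.
Local Notation F := {ffun 'I_n -> V}.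

Definition adv (y : V) (q : F) : F := [ffun j => br y (q j)].

Inductive Gen (Q : F -> Prop) : F -> Prop :=
| G0 : Gen Q 0
| Gadd y q v : Q q -> Gen Q v -> Gen Q (adv y q + v).

Lemma Gen_mono (Q Q' : F -> Prop) : (forall q, Q q -> Q' q) ->
  forall v, Gen Q v -> Gen Q' v.
Proof.
move=> HQ v; elim=> [|y q w Qq _ IH]; first exact: G0.
by apply: Gadd => //; exact: HQ.
Qed.

Lemma claim : lie_simple br -> forall m (Q : F -> Prop),
  Q 0 -> (forall u v, Q u -> Q v -> Q (u + v)) -> (forall c u, Q u -> Q (c *: u)) ->
  (forall y q, Q q -> Q (adv y q)) ->
  (forall q, Q q -> forall j : 'I_n, (m <= j)%N -> q j = 0) ->
  forall q, Q q -> Gen Q q.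
Proof.
move=> Hs; elim=> [|m IH] Q Q0 QD QZ Qad Qsupp q Qq.
  have -> : q = 0 by apply/ffunP => j; rewrite ffunE; exact: (Qsupp q Qq j).
  exact: G0.
case: (ltnP m n) => hmn; last first.
  apply: IH => // q' Qq' j hj; exfalso.
  by have := ltn_ord j; move: hj hmn; clear; lia.
pose i := Ordinal hmn.
pose Q' := fun q => Q q /\ q i = 0.
have Q'gen : forall q, Q' q -> Gen Q q.
  move=> q' Q'q'; apply: (Gen_mono (Q := Q')); first by move=> ? [].
  apply: IH => //.
  - by split => //; rewrite ffunE.
  - by move=> u v [Qu ui] [Qv vi]; split; [exact: QD | rewrite ffunE ui vi addr0].
  - by move=> c u [Qu ui]; split; [exact: QZ | rewrite ffunE ui scaler0].
  - by move=> y u [Qu ui]; split; [exact: Qad | rewrite ffunE ui br0r].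
  - move=> u [Qu ui] j hj; case: (ltnP m j) => hj'; first exact: Qsupp.
    have -> : j = i by apply: val_inj => /=; move: hj hj'; clear; lia.
    exact: ui.
pose S := fun v => exists q, Q q /\ q i = v.
have S0 : S 0 by exists 0; split => //; rewrite ffunE.
have SD : forall u v, S u -> S v -> S (u + v).
  by move=> u v [qu [? <-]] [qv [? <-]]; exists (qu + qv); split; [exact: QD | rewrite ffunE].
have SZ : forall c u, S u -> S (c *: u).
  by move=> c u [qu [? <-]]; exists (c *: qu); split; [exact: QZ | rewrite ffunE].
have Sbr : forall x v, S v -> S (br x v).
  by move=> x v [qu [? <-]]; exists (adv x qu); split; [exact: Qad | rewrite ffunE].
case: (ideal_dich Hs S0 SD SZ Sbr) => [Hz | Hall].
  by apply: Q'gen; split => //; apply: Hz; exists q.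
suff H : forall v, BrSpan v -> forall q, Q q -> q i = v -> Gen Q q.
  exact: (H _ (brspan_all Hs (q i)) q Qq erefl).
move=> v0; elim=> [|y z v _ IHv] q' Qq' hq'.
  by apply: Q'gen.
have [qz [Qqz hqz]] := Hall z.
pose q2 := q' + (-1) *: adv y qz.
have Qq2 : Q q2 by apply: QD => //; apply: QZ; exact: Qad.
have -> : q' = adv y qz + q2 by rewrite /q2 scaleN1r addrC subrK.
apply: Gadd => //; apply: IHv => //.
by rewrite /q2 !ffunE hq' scaleN1r hqz addrC addKr.
Qed.

End Claim.

End LieAux.

Section Curr.
Variables (k : fieldType) (V : vectType k) (br : V -> V -> V) (A : comAlgType k).
Hypothesis Hbr : is_lie_bracket br.
Local Notation n := (\dim (fullv : {vspace V})).
Local Notation e i := (tnth (basisV V) i).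
Local Notation cd := (coord (basisV V)).

Definition Phi (x : curr V A) (q : {ffun 'I_n -> V}) : curr V A :=
  [ffun l => \sum_i cd l (q i) *: x i].
Definition hat (y : V) : curr V A := [ffun i => cd i y *: 1].

Lemma Phi_add x q1 q2 : Phi x (q1 + q2) = curr_add (Phi x q1) (Phi x q2).
Proof.
apply/ffunP => l; rewrite !ffunE -big_split /=; apply: eq_bigr => i _.
by rewrite ffunE linearD scalerDl.
Qed.

Lemma Phi_scale x c q : Phi x (c *: q) = curr_scale c (Phi x q).
Proof.
apply/ffunP => l; rewrite !ffunE scaler_sumr; apply: eq_bigr => i _.
by rewrite ffunE linearZ scalerA.
Qed.

Lemma Phi_zero x : Phi x 0 = curr_zero V A.
Proof.
apply/ffunP => l; rewrite !ffunE big1 // => i _.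
by rewrite ffunE linear0 scale0r.
Qed.

Lemma Phi_id x : Phi x [ffun i => e i] = x.
Proof.
have fr : free (basisV V) by exact: (basis_free (vbasisP fullv)).
apply/ffunP => l; rewrite ffunE (bigD1 l) //= big1 ?addr0.
  by rewrite ffunE (tnth_nth 0) coord_free // eqxx scale1r.
by move=> i /negbTE nil; rewrite ffunE (tnth_nth 0) coord_free // nil scale0r.
Qed.

Lemma coord_br l y w : cd l (br y w) =
  \sum_i \sum_j (cd i y * cd j w) * cd l (br (e i) (e j)).
Proof.
rewrite {1}(coord_vbasis (memvf y)) {1}(coord_vbasis (memvf w)).
rewrite br_suml // linear_sum; apply: eq_bigr => i _.
rewrite brZl // linearZ /= br_sumr // linear_sum mulr_sumr; apply: eq_bigr => j _.
by rewrite brZr // linearZ /= !(tnth_nth 0) mulrA.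
Qed.

Lemma Phi_adv x y q : Phi x (adv br y q) = curr_br br (hat y) (Phi x q).
Proof.
apply/ffunP => l; rewrite !ffunE.
under eq_bigr => m _ do rewrite ffunE coord_br scaler_suml.
rewrite exchange_big /=; apply: eq_bigr => i _.
under eq_bigr => m _ do rewrite scaler_suml.
rewrite exchange_big /=; apply: eq_bigr => j _.
rewrite !ffunE -scalerAl mul1r scalerA scaler_sumr.
apply: eq_bigr => m _.
by rewrite !scalerA; congr (_ *: _); rewrite mulrC !mulrA.
Qed.

Lemma curr_anti (x y : curr V A) : curr_br br x y = curr_scale (-1) (curr_br br y x).
Proof.
apply/ffunP => l; rewrite !ffunE exchange_big scaler_sumr; apply: eq_bigr => i _.
rewrite scaler_sumr; apply: eq_bigr => j _.
by rewrite br_anti // linearN /= [x _ * _]mulrC scaleNr scaleN1r.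
Qed.

End Curr.

Theorem corollary4p4 (k : fieldType) (V : vectType k) (br : V -> V -> V)
  (A : comAlgType k) :
  (2 \notin [pchar k])%N ->
  is_lie_bracket br ->
  lie_central_simple br ->
  forall I : curr V A -> Prop, curr_ideal br I -> curr_closed br I.
Proof.
move=> _ Hbr [Hs _] I [HI0 HIadd HIscale HIbr] x; split; last first.
  by move=> Ix y; rewrite curr_anti //; apply: HIscale; exact: HIbr.
move=> Hz.
pose u : {ffun 'I_(\dim (fullv : {vspace V})) -> V} := [ffun i => tnth (basisV V) i].
pose Q := fun (q : {ffun 'I_(\dim (fullv : {vspace V})) -> V}) => forall y, I (Phi x (adv br y q)).
have Q0 : Q 0.
  move=> y; have -> : @adv _ _ br _ y (0 : {ffun 'I_(\dim (fullv : {vspace V})) -> V}) = 0 by apply/ffunP => j; rewrite !ffunE br0r.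
  by rewrite Phi_zero.
have QD : forall q1 q2, Q q1 -> Q q2 -> Q (q1 + q2).
  move=> q1 q2 h1 h2 y.
  have -> : adv br y (q1 + q2) = adv br y q1 + adv br y q2.
    by apply/ffunP => j; rewrite !ffunE brDr.
  by rewrite Phi_add; apply: HIadd.
have QZ : forall c q, Q q -> Q (c *: q).
  move=> c q h y.
  have -> : adv br y (c *: q) = c *: adv br y q.
    by apply/ffunP => j; rewrite !ffunE brZr.
  by rewrite Phi_scale; apply: HIscale.
have Qad : forall z q, Q q -> Q (adv br z q).
  by move=> z q h y; rewrite Phi_adv //; apply: HIbr.
have Qu : Q u.
  by move=> y; rewrite Phi_adv // Phi_id curr_anti //; apply: HIscale.
have supp : forall q, Q q -> forall j : 'I_(\dim (fullv : {vspace V})), (\dim (fullv : {vspace V}) <= j)%N -> q j = 0.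
  by move=> q _ j; rewrite leqNgt ltn_ord.
have G := claim Hbr Hs Q0 QD QZ Qad supp Qu.
have HG : forall v, Gen br Q v -> I (Phi x v).
  move=> v; elim=> [|y q w Qq _ IH]; first by rewrite Phi_zero.
  by rewrite Phi_add; apply: HIadd.
by rewrite -(Phi_id x); exact: HG.
Qed.
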